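(* Consider the binary random graph affiliation mixture model with $Q\ge 2$ groups, on $Q+1$ nodes. Let $$U_Q(X)=\mathbb E\Big(\prod_{1\le i<j\le Q+1}(X-X_{ij})\Big),$$ a univariate polynomial of degree $\binom{Q+1}2$ in an indeterminate $X$ (expectation taken coefficientwise), and $$V_Q(X,Y)=\mathbb E\Big(\Big(X+(Q-1)Y-\sum_{1\le i\le Q}X_{i(Q+1)}\Big)\prod_{1\le i<j\le Q}(X-X_{ij})\Big),$$ of degree $\binom Q2+1$ in $X$ and degree $1$ in $Y$. Then $U_Q(\alpha)=0$ (so $\alpha$ is a real root of $U_Q$), $V_Q(\alpha,\beta)=0$, and the coefficient of $Y$ in $V_Q(\alpha,Y)$ is non-zero if and only if $\alpha\ne\beta$.
   Context: Random graph mixture model: nodes have i.i.d. latent groups $Z_i\in\{1,\dots,Q\}$ with $\pi_q=\mathbb P(Z_i=q)\in(0,1)$, $\sum_q\pi_q=1$; edge variables $X_{ij}$ ($i<j$) are conditionally independent given all $Z$'s, with law of $X_{ij}$ depending only on $(Z_i,Z_j)$. Binary affiliation model: $X_{ij}\in\{0,1\}$ with $\mathbb P(X_{ij}=1\mid Z_i=q,Z_j=l)=\alpha$ if $q=l$ and $=\beta$ if $q\ne l$. *)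

(* Defs.v *)
From HB Require Import structures.
From mathcomp Require Import all_boot all_order all_algebra.
Set Implicit Arguments. Unset Strict Implicit. Unset Printing Implicit Defensive.
Import Order.TTheory GRing.Theory Num.Theory.
Local Open Scope ring_scope.

Definition edge (n : nat) := {e : 'I_n * 'I_n | (e.1 < e.2)%N}.

Section Affiliation.
Variables (R : realFieldType) (Q : nat) (pi : 'I_Q -> R) (alpha beta : R).

Definition edge_prob (n : nat) (Z : {ffun 'I_n -> 'I_Q}) (e : edge n) : R :=
  if Z (sval e).1 == Z (sval e).2 then alpha else beta.

Definition bern (p : R) (b : bool) : R := if b then p else 1 - p.

Definition weight (n : nat) (Z : {ffun 'I_n -> 'I_Q}) (X : {ffun edge n -> bool}) : R :=
  (\prod_(i < n) pi (Z i)) * \prod_(e : edge n) bern (edge_prob Z e) (X e).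

Definition Epoly (n : nat) (F : {ffun 'I_n -> 'I_Q} -> {ffun edge n -> bool} -> {poly R})
  : {poly R} :=
  \sum_(Z : {ffun 'I_n -> 'I_Q}) \sum_(X : {ffun edge n -> bool}) (weight Z X)%:P * F Z X.

Definition Epoly2 (n : nat)
  (F : {ffun 'I_n -> 'I_Q} -> {ffun edge n -> bool} -> {poly {poly R}}) : {poly {poly R}} :=
  \sum_(Z : {ffun 'I_n -> 'I_Q}) \sum_(X : {ffun edge n -> bool})
     (weight Z X)%:P%:P * F Z X.

Definition U_Q : {poly R} :=
  Epoly (fun _ X => \prod_(e : edge Q.+1) ('X - ((X e : nat)%:R)%:P)).

(* V_Q(X,Y), represented in {poly {poly R}}: outer variable X, inner variable Y.
   V_Q = E((X + (Q-1) Y - sum_{i<=Q} X_{i,Q+1}) prod_{1<=i<j<=Q}(X - X_ij)) *)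
Definition V_Q : {poly {poly R}} :=
  Epoly2 (fun _ X =>
    ('X + ((Q.-1)%:R *: 'X)%:P
       - (\sum_(e : edge Q.+1 | (sval e).2 == ord_max) ((X e : nat)%:R : R))%:P%:P)
    * \prod_(e : edge Q.+1 | ((sval e).2 < Q)%N) ('X - ((X e : nat)%:R)%:P%:P)).

End Affiliation.

(* Main.v *)
Require Import Defs.
From HB Require Import structures.
From mathcomp Require Import all_boot all_order all_algebra.
Import Order.TTheory GRing.Theory Num.Theory.
Local Open Scope ring_scope.

Lemma Eprod (R : realFieldType) n (p : edge n -> R) (g : edge n -> bool -> R) :
  \sum_(X : {ffun edge n -> bool}) (\prod_e bern (p e) (X e)) * \prod_e g e (X e)
  = \prod_e (p e * g e true + (1 - p e) * g e false).
Proof.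
rewrite [RHS](eq_bigr (fun e => \sum_(b : bool) bern (p e) b * g e b)); last first.
  by move=> e _; rewrite big_bool.
rewrite bigA_distr_bigA /=.
by apply: eq_bigr => X _; rewrite big_split.
Qed.


Section S.
Variables (R : realFieldType) (Q : nat) (pi : 'I_Q -> R) (alpha beta : R).

Lemma U_eval : (U_Q pi alpha beta).[alpha] =
  \sum_Z \sum_X weight pi alpha beta Z X * \prod_(e : edge Q.+1) (alpha - (X e : nat)%:R).
Proof.
rewrite /U_Q /Epoly horner_sum; apply: eq_bigr => Z _; rewrite horner_sum.
apply: eq_bigr => X _; rewrite hornerM hornerC horner_prod; congr (_ * _).
by apply: eq_bigr => e _; rewrite hornerD hornerN hornerX hornerC.
Qed.

Definition Aset (e : edge Q.+1) := ((sval e).2 < Q)%N.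
Definition Bset (e : edge Q.+1) := (sval e).2 == ord_max.

Lemma V_eval1 : (V_Q pi alpha beta).[alpha%:P] =
  \sum_Z \sum_X (weight pi alpha beta Z X)%:P *
   ((alpha%:P + (Q.-1)%:R *: 'X - (\sum_(e | Bset e) ((X e : nat)%:R : R))%:P)
    * (\prod_(e | Aset e) (alpha - (X e : nat)%:R))%:P).
Proof.
rewrite /V_Q /Epoly2 horner_sum; apply: eq_bigr => Z _; rewrite horner_sum.
apply: eq_bigr => X _; rewrite hornerM hornerC !hornerM !hornerD hornerN !hornerC hornerX.
rewrite horner_prod rmorph_prod; congr (_ * (_ * _)).
by apply: eq_bigr => e _; rewrite hornerD hornerN hornerX hornerC rmorphB.
Qed.
End S.

Local Open Scope ring_scope.

Section S.
Variables (R : realFieldType) (Q : nat) (pi : 'I_Q -> R) (alpha beta : R).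

Lemma V_eval : ((V_Q pi alpha beta).[alpha%:P]).[beta] =
  \sum_(Z : {ffun 'I_Q.+1 -> 'I_Q}) \sum_(X : {ffun edge Q.+1 -> bool}) weight pi alpha beta Z X *
   ((alpha + (Q.-1)%:R * beta - \sum_(e : edge Q.+1 | Bset Q e) ((X e : nat)%:R : R))
    * \prod_(e : edge Q.+1 | Aset Q e) (alpha - (X e : nat)%:R)).
Proof.
rewrite V_eval1 horner_sum; apply: eq_bigr => Z _; rewrite horner_sum.
apply: eq_bigr => X _.
by rewrite hornerM hornerC hornerM hornerC !hornerD hornerN hornerZ hornerX !hornerC.
Qed.

Lemma V_coef : ((V_Q pi alpha beta).[alpha%:P])`_1 =
  \sum_(Z : {ffun 'I_Q.+1 -> 'I_Q}) \sum_(X : {ffun edge Q.+1 -> bool}) weight pi alpha beta Z X *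
   ((Q.-1)%:R * \prod_(e : edge Q.+1 | Aset Q e) (alpha - (X e : nat)%:R)).
Proof.
rewrite V_eval1 coef_sum; apply: eq_bigr => Z _; rewrite coef_sum.
apply: eq_bigr => X _.
rewrite coefCM coefMC !coefD coefN coefZ coefX !coefC/=.
by rewrite add0r subr0 mulr1.
Qed.
End S.


Lemma Eprod_lin (R : realFieldType) n (p : edge n -> R) (g : edge n -> bool -> R) e0
  (hg : forall b, g e0 b = 1) :
  \sum_(X : {ffun edge n -> bool}) (\prod_e bern (p e) (X e)) * ((X e0 : nat)%:R * \prod_e g e (X e))
  = p e0 * \prod_e (p e * g e true + (1 - p e) * g e false).
Proof.
have H (X : {ffun edge n -> bool}) : (X e0 : nat)%:R * \prod_e g e (X e) =
   \prod_e (if e == e0 then (X e : nat)%:R else g e (X e)).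
  rewrite [RHS](bigD1 e0) //= eqxx (bigD1 e0) //= hg mul1r; congr (_ * _).
  by apply: eq_bigr => e /negbTE ->.
rewrite (eq_bigr (fun X : {ffun edge n -> bool} => (\prod_e bern (p e) (X e)) * \prod_e (if e == e0 then (X e : nat)%:R else g e (X e)))); last by move=> X _; rewrite H.
rewrite (@Eprod R n p (fun e b => if e == e0 then (b : nat)%:R else g e b)).
rewrite (bigD1 e0) //= [X in _ = _ * X](bigD1 e0) //= eqxx !hg.
rewrite !mulr1 mulr0 addr0 [p e0 + _]addrC subrK mul1r; congr (_ * _).
by apply: eq_bigr => e /negbTE ->.
Qed.

Lemma bern_lin (R : realFieldType) (p a : R) :
  p * (a - (true : nat)%:R) + (1 - p) * (a - (false : nat)%:R) = a - p.
Proof.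
by rewrite /= subr0 mulrBr mulr1 mulrBl mul1r addrC addrA subrK.
Qed.


Section Z.
Variables (R : realFieldType) (Q : nat) (pi : 'I_Q -> R) (alpha beta : R).
Implicit Types (Z : {ffun 'I_Q.+1 -> 'I_Q}) (X : {ffun edge Q.+1 -> bool}).

Notation pZ Z e := (edge_prob alpha beta Z e).
Definition PiZ Z := \prod_(i < Q.+1) pi (Z i).

Lemma E_weight Z (g : edge Q.+1 -> bool -> R) :
  \sum_X weight pi alpha beta Z X * \prod_e g e (X e) =
  PiZ Z * \prod_e (pZ Z e * g e true + (1 - pZ Z e) * g e false).
Proof.
rewrite -(@Eprod R Q.+1 (fun e => pZ Z e) g) big_distrr.
by apply: eq_bigr => X _; rewrite /weight -mulrA.
Qed.

Lemma E_weight_lin Z (g : edge Q.+1 -> bool -> R) e0 (hg : forall b, g e0 b = 1) :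
  \sum_X weight pi alpha beta Z X * ((X e0 : nat)%:R * \prod_e g e (X e)) =
  PiZ Z * (pZ Z e0 * \prod_e (pZ Z e * g e true + (1 - pZ Z e) * g e false)).
Proof.
rewrite -(@Eprod_lin R Q.+1 (fun e => pZ Z e) g e0 hg) big_distrr.
by apply: eq_bigr => X _; rewrite /weight -mulrA.
Qed.

Lemma pigeon Z : exists e : edge Q.+1, Z (sval e).1 == Z (sval e).2.
Proof.
have : ~~ injectiveb Z.
  apply/injectiveP => inj; have := leq_card _ inj; by rewrite !card_ord ltnn.
case/injectivePn => i [j] nij eZ.
case: (ltngtP i j) => [lt|lt|eq].
- by exists (exist _ (i, j) lt); rewrite /= eZ.
- by exists (exist _ (j, i) lt); rewrite /= eZ.
- by move/val_inj: eq => eq; rewrite eq eqxx in nij.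
Qed.

Lemma U_zero : (U_Q pi alpha beta).[alpha] = 0.
Proof.
rewrite U_eval big1 // => Z _.
rewrite (E_weight Z (fun e b => alpha - (b : nat)%:R)).
have [e he] := pigeon Z.
rewrite (bigD1 e) //= bern_lin /edge_prob he subrr mul0r mulr0 //.
Qed.
End Z.


Section Z.
Variables (R : realFieldType) (Q : nat) (pi : 'I_Q -> R) (alpha beta : R).
Implicit Types (Z : {ffun 'I_Q.+1 -> 'I_Q}) (X : {ffun edge Q.+1 -> bool}).

Notation pZ Z e := (edge_prob alpha beta Z e).

Definition gA (e : edge Q.+1) (b : bool) : R := if Aset Q e then alpha - (b : nat)%:R else 1.

Lemma EA_eq (p : R) e : p * gA e true + (1 - p) * gA e false = if Aset Q e then alpha - p else 1.
Proof.
rewrite /gA; case: (Aset Q e); first by rewrite bern_lin.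
by rewrite !mulr1 addrC subrK.
Qed.

Lemma V_Z Z (c : R) :
  \sum_X weight pi alpha beta Z X *
   ((c - \sum_(e : edge Q.+1 | Bset Q e) ((X e : nat)%:R : R))
    * \prod_(e : edge Q.+1 | Aset Q e) (alpha - (X e : nat)%:R))
  = PiZ _ _ pi Z * ((c - \sum_(e : edge Q.+1 | Bset Q e) pZ Z e)
                * \prod_(e : edge Q.+1 | Aset Q e) (alpha - pZ Z e)).
Proof.
have E1 X : weight pi alpha beta Z X *
   ((c - \sum_(e : edge Q.+1 | Bset Q e) ((X e : nat)%:R : R))
    * \prod_(e : edge Q.+1 | Aset Q e) (alpha - (X e : nat)%:R))
  = c * (weight pi alpha beta Z X * \prod_e gA e (X e))
    - \sum_(e0 : edge Q.+1 | Bset Q e0)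
        weight pi alpha beta Z X * ((X e0 : nat)%:R * \prod_e gA e (X e)).
  have HP : \prod_(e : edge Q.+1 | Aset Q e) (alpha - (X e : nat)%:R) = \prod_e gA e (X e).
    by rewrite big_mkcond.
  by rewrite HP mulrBl mulrBr mulrCA big_distrl big_distrr.
rewrite (eq_bigr _ (fun X _ => E1 X)) sumrB -big_distrr /= exchange_big /=.
transitivity (c * (PiZ _ _ pi Z * \prod_e (pZ Z e * gA e true + (1 - pZ Z e) * gA e false))
  - \sum_(e0 | Bset Q e0) PiZ _ _ pi Z * (pZ Z e0 *
     \prod_e (pZ Z e * gA e true + (1 - pZ Z e) * gA e false))).
  congr (_ - _); first by congr (_ * _); apply: E_weight.
  apply: eq_bigr => e0 He0; apply: E_weight_lin => b.
  by rewrite /gA; move: He0; rewrite /Aset /Bset => /eqP ->; rewrite ltnn.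
rewrite -big_distrr /= -big_distrl /= mulrCA -mulrBr; congr (_ * _).
rewrite -mulrBl; congr (_ * _).
by rewrite [RHS]big_mkcond; apply: eq_bigr => e _; rewrite EA_eq.
Qed.

Lemma Vc_Z Z (c : R) :
  \sum_X weight pi alpha beta Z X *
   (c * \prod_(e : edge Q.+1 | Aset Q e) (alpha - (X e : nat)%:R))
  = PiZ _ _ pi Z * (c * \prod_(e : edge Q.+1 | Aset Q e) (alpha - pZ Z e)).
Proof.
have H X : weight pi alpha beta Z X *
   (c * \prod_(e : edge Q.+1 | Aset Q e) (alpha - (X e : nat)%:R)) =
   c * (weight pi alpha beta Z X * \prod_e gA e (X e)).
  have HP : \prod_(e : edge Q.+1 | Aset Q e) (alpha - (X e : nat)%:R) = \prod_e gA e (X e).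
    by rewrite big_mkcond.
  by rewrite HP mulrCA.
rewrite (eq_bigr _ (fun X _ => H X)) -big_distrr /=.
transitivity (c * (PiZ _ _ pi Z * \prod_e (pZ Z e * gA e true + (1 - pZ Z e) * gA e false))).
  by congr (_ * _); apply: E_weight.
rewrite mulrCA; congr (_ * (_ * _)).
by rewrite [RHS]big_mkcond; apply: eq_bigr => e _; rewrite EA_eq.
Qed.
End Z.


Section C.
Variables (R : realFieldType) (q : nat) (pi : 'I_q.+1 -> R) (alpha beta : R).
Local Notation Q := q.+1.
Implicit Types (Z : {ffun 'I_Q.+1 -> 'I_Q}).
Notation pZ Z e := (edge_prob alpha beta Z e).

Definition wid (i : 'I_Q) : 'I_Q.+1 := widen_ord (leqnSn Q) i.
Definition injb Z := injectiveb (fun i : 'I_Q => Z (wid i)).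

Lemma notinj Z : ~~ injb Z -> exists e : edge Q.+1, Aset Q e && (Z (sval e).1 == Z (sval e).2).
Proof.
case/injectivePn => i [j] nij eZ.
case: (ltngtP i j) => [lt|lt|eq].
- have lt' : (wid i < wid j)%N by [].
  by exists (exist _ (wid i, wid j) lt'); rewrite /Aset /= ltn_ord eZ eqxx.
- have lt' : (wid j < wid i)%N by [].
  by exists (exist _ (wid j, wid i) lt'); rewrite /Aset /= ltn_ord eZ eqxx.
- by move/val_inj: eq => eq; rewrite eq eqxx in nij.
Qed.

Lemma inj_edge Z : injb Z -> forall e : edge Q.+1, Aset Q e -> Z (sval e).1 != Z (sval e).2.
Proof.
move/injectiveP => inj [[a b] hab]; rewrite /Aset /= => hb.
have ha : (a < Q)%N by apply: ltn_trans hab hb.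
have -> : a = wid (Ordinal ha) by apply: val_inj.
have -> : b = wid (Ordinal hb) by apply: val_inj.
apply/negP => /eqP /inj /(congr1 val) /= eab.
by move: hab; rewrite eab ltnn.
Qed.

Definition Kc := \prod_(e : edge Q.+1 | Aset Q e) (alpha - beta).

Lemma prodA Z : \prod_(e : edge Q.+1 | Aset Q e) (alpha - pZ Z e) = if injb Z then Kc else 0.
Proof.
case: ifP => hinj.
  apply: eq_bigr => e he; by rewrite /edge_prob (negbTE (inj_edge _ hinj _ he)).
have [e /andP [he hz]] := notinj _ (negbT hinj).
by rewrite (bigD1 e) //= /edge_prob hz subrr mul0r.
Qed.

Definition mkB (i : 'I_Q) : edge Q.+1 := exist _ (wid i, ord_max) (ltn_ord i).
Definition unB (e : edge Q.+1) : 'I_Q := inord (sval e).1.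

Lemma sumB Z : injb Z -> \sum_(e : edge Q.+1 | Bset Q e) pZ Z e = alpha + (Q.-1)%:R * beta.
Proof.
move=> hinj.
rewrite (reindex_onto mkB unB); last first.
  move=> [[a b] hab]; rewrite /Bset /= => /eqP eb; subst b.
  apply: val_inj => /=; congr pair; apply: val_inj => /=.
  by rewrite /unB /= inordK.
rewrite (eq_bigl (fun _ => true)); last first.
  move=> j; rewrite /Bset /= eqxx /=; apply/eqP/val_inj => /=.
  by rewrite /unB /= inordK.
move/injectiveP: (hinj) => inj.
have := @inj_card_onto _ _ _ inj (leqnn _) (Z ord_max).
case/codomP => k hk.
rewrite (bigD1 k) //= /edge_prob /= -hk eqxx; congr (_ + _).
rewrite (eq_bigr (fun _ => beta)); last first.
  move=> j hj; suff H : Z (wid j) != Z (wid k) by rewrite hk /= (negbTE H).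
  by apply: contra hj => /eqP /inj ->.
by rewrite sumr_const cardC1 card_ord mulr_natl.
Qed.
End C.


Theorem proposition1 (R : realFieldType) (Q : nat) (hQ : (2 <= Q)%N)
  (pi : 'I_Q -> R) (hpi : forall q, 0 < pi q < 1) (hsum : \sum_(q < Q) pi q = 1)
  (alpha beta : R) (ha : 0 <= alpha <= 1) (hb : 0 <= beta <= 1) :
  (U_Q pi alpha beta).[alpha] = 0 /\
  ((V_Q pi alpha beta).[alpha%:P]).[beta] = 0 /\
  (((V_Q pi alpha beta).[alpha%:P])`_1 != 0 <-> alpha != beta).
Proof.
case: Q hQ pi hpi hsum => [//|q] hQ pi hpi hsum.
split; first exact: U_zero.
split.
  rewrite V_eval big1 // => Z _; rewrite V_Z.
  case: (boolP (injb _ Z)) => hinj.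
    by rewrite sumB // subrr mul0r mulr0.
  by rewrite prodA (negbTE hinj) !mulr0.
rewrite V_coef.
rewrite (eq_bigr (fun Z => (q%:R * Kc R q alpha beta) *
   (if injb _ Z then PiZ _ _ pi Z else 0))); last first.
  move=> Z _; rewrite Vc_Z prodA /=; case: ifP => _; last by rewrite !mulr0.
  by rewrite mulrC.
rewrite -big_distrr /=.
set S := \sum_Z _.
have Spos : 0 < S.
  pose Z0 : {ffun 'I_q.+2 -> 'I_q.+1} := [ffun i : 'I_q.+2 => (inord i : 'I_q.+1)].
  have hZ0 : injb _ Z0.
    apply/injectiveP => i j; rewrite !ffunE => /(congr1 val).
    by rewrite /wid /= !inordK //= => /val_inj.
  rewrite /S (bigD1 Z0) //= hZ0; apply: ltr_wpDr.
    apply: sumr_ge0 => Z _; case: ifP => _ //; apply: ltW.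
    by apply: prodr_gt0 => i _; case/andP: (hpi (Z i)).
  by apply: prodr_gt0 => i _; case/andP: (hpi (Z0 i)).
have qn0 : q%:R != 0 :> R by rewrite pnatr_eq0 -lt0n.
have hK : (Kc R q alpha beta != 0) = (alpha != beta).
  apply/idP/idP.
    apply: contra => /eqP ->; rewrite /Kc.
    pose e0 : edge q.+2 := exist _ (ord0, Ordinal (n:=q.+2) (m:=1) isT) isT.
    have he0 : Aset q.+1 e0 by [].
    by rewrite (bigD1 e0) //= subrr mul0r.
  move=> hab; rewrite /Kc; apply: (big_ind (fun x => x != 0)); first exact: oner_neq0.
    by move=> x y; apply: mulf_neq0.
  by move=> e _; rewrite subr_eq0.
rewrite -hK !mulf_eq0 !negb_or qn0 (gt_eqF Spos) /= andbT.
by split.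
Qed.
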